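(* There exist binary Euclidean LCD codes with parameters $[30,11,9]$, $[30,15,7]$ and $[33,11,11]$.
   Context: A binary $[n,k,d]$ code is a $k$-dimensional subspace $C\subseteq\mathbb{F}_2^n$ with minimum nonzero Hamming weight $d$; it is Euclidean LCD if $C\cap C^{\perp_E}=\{0\}$, where $C^{\perp_E}$ is the dual with respect to $\langle x,y\rangle_E=\sum x_iy_i$. *)

(* Defs.v *)
From mathcomp Require Import all_boot all_algebra.
Set Implicit Arguments. Unset Strict Implicit. Unset Printing Implicit Defensive.
Import GRing.Theory.
Local Open Scope ring_scope.

Definition hwt (n : nat) (x : 'rV['F_2]_n) : nat := #|[set i | x 0 i != 0]|.

Definition eip (n : nat) (x y : 'rV['F_2]_n) : 'F_2 := \sum_(i < n) x 0 i * y 0 i.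

Definition is_binary_code (n k d : nat) (C : {vspace 'rV['F_2]_n}) : Prop :=
  [/\ \dim C = k,
      (exists2 c, c \in C & (c != 0) && (hwt c == d))
    & forall c, c \in C -> c != 0 -> (d <= hwt c)%N].

Definition eu_dual (n : nat) (C : {vspace 'rV['F_2]_n}) : pred 'rV['F_2]_n :=
  fun x => [forall y, (y \in C) ==> (eip x y == 0)].

Definition euclidean_LCD (n : nat) (C : {vspace 'rV['F_2]_n}) : Prop :=
  forall x, x \in C -> eu_dual C x -> x = 0.

Arguments is_binary_code n k d C : clear implicits.

(* Main.v *)
Require Import Defs.
From mathcomp Require Import all_boot all_algebra.
Set Implicit Arguments. Unset Strict Implicit. Unset Printing Implicit Defensive.
Import GRing.Theory.
Local Open Scope ring_scope.

Definition b2F (b : bool) : 'F_2 := (b : nat)%:R.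
Lemma b2F_add x y : b2F (x (+) y) = b2F x + b2F y.
Proof. by case: x; case: y; apply/val_inj. Qed.
Lemma b2F_mul x y : b2F (x && y) = b2F x * b2F y.
Proof. by case: x; case: y; apply/val_inj. Qed.
Lemma b2F_neq0 b : (b2F b != 0) = b.
Proof. by case: b. Qed.
Lemma F2_cases (k : 'F_2) : k = 0 \/ k = 1.
Proof. case: k => [[|[|m]] Hm]; [left|right|by []]; exact/val_inj. Qed.

Section Gen.
Variable n : nat.

Definition vec (s : seq bool) : 'rV['F_2]_n := \row_(i < n) b2F (nth false s i).

Fixpoint xorl (a b : seq bool) : seq bool :=
  match a, b with
  | x :: a', y :: b' => (x (+) y) :: xorl a' b'
  | [::], _ => b
  | _, [::] => a
  end.

Lemma nth_xorl a b i : nth false (xorl a b) i = nth false a i (+) nth false b i.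
Proof.
elim: a b i => [|x a IH] [|y b] [|i] //=; by rewrite ?addbF.
Qed.

Lemma vec_xorl a b : vec (xorl a b) = vec a + vec b.
Proof. by apply/rowP => i; rewrite !mxE nth_xorl b2F_add. Qed.

Lemma vec_nseq : vec (nseq n false) = 0.
Proof. by apply/rowP => i; rewrite !mxE nth_nseq; case: ifP. Qed.

Definition wt (s : seq bool) : nat := count (nth false s) (iota 0 n).
Definition ipl (a b : seq bool) : bool :=
  foldr (fun i r => (nth false a i && nth false b i) (+) r) false (iota 0 n).

Lemma hwt_vec s : hwt (vec s) = wt s.
Proof.
rewrite /hwt /wt cardsE cardE size_filter -val_enum_ord count_map.
rewrite enumT; apply: eq_count => i; by rewrite -[LHS]/(vec s 0 i != 0) mxE b2F_neq0.
Qed.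

Lemma eip_vec a b : eip (vec a) (vec b) = b2F (ipl a b).
Proof.
rewrite /eip /ipl.
rewrite (eq_bigr (fun i : 'I_n => b2F (nth false a i && nth false b i))); last first.
  by move=> i _; rewrite !mxE b2F_mul.
rewrite -(big_morph b2F b2F_add (erefl (b2F false))).
rewrite -(big_mkord xpredT (fun i => nth false a i && nth false b i)).
rewrite /index_iota subn0; congr b2F.
elim: (iota 0 n) => [|j r IH]; first by rewrite big_nil.
by rewrite big_cons IH.
Qed.


Fixpoint allcomb (P : seq bool -> bool) (gs : seq (seq bool)) (acc : seq bool) : bool :=
  match gs with
  | [::] => P acc
  | g :: gs' => allcomb P gs' acc && allcomb P gs' (xorl acc g)
  end.

Fixpoint excomb (P : seq bool -> bool) (gs : seq (seq bool)) (acc : seq bool) : bool :=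
  match gs with
  | [::] => P acc
  | g :: gs' => excomb P gs' acc || excomb P gs' (xorl acc g)
  end.

Lemma allcombP P gs acc : allcomb P gs acc ->
  forall c, c \in <<map vec gs>>%VS -> exists2 s, P s & vec acc + c = vec s.
Proof.
elim: gs acc => [|g gs IH] acc /=.
  by move=> Pa c; rewrite span_nil memv0 => /eqP ->; exists acc; rewrite ?addr0.
move=> /andP [H0 H1] c; rewrite span_cons => /memv_addP [u /vlineP [k ->] [v vin ->]].
case: (F2_cases k) => ->.
  by rewrite scale0r add0r; apply: IH.
have [s Ps Es] := IH _ H1 v vin.
by exists s => //; rewrite scale1r addrA -vec_xorl.
Qed.

Lemma excombP P gs acc : excomb P gs acc ->
  exists s, P s /\ exists2 c, c \in <<map vec gs>>%VS & vec acc + c = vec s.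
Proof.
elim: gs acc => [|g gs IH] acc /=.
  by move=> Pa; exists acc; split => //; exists 0; rewrite ?mem0v ?addr0.
move=> /orP [] /IH [s [Ps [c cin Ec]]]; exists s; split => //.
  by exists c => //; rewrite span_cons -[c]add0r; apply: memv_add => //; apply: mem0v.
exists (vec g + c); last by rewrite addrA -vec_xorl.
by rewrite span_cons; apply: memv_add => //; apply: memv_line.
Qed.

Fixpoint freechk (j : nat) (gs : seq (seq bool)) : bool :=
  match gs with
  | [::] => true
  | g :: gs' => [&& (j < n)%N, nth false g j,
                  allcomb (fun s => ~~ nth false s j) gs' (nseq n false)
                & freechk j.+1 gs']
  end.

Lemma freechkP j gs : freechk j gs -> free (map vec gs).
Proof.
elim: gs j => [|g gs IH] j /=; first by rewrite nil_free.
case/and4P => jn gj Hall Hf; rewrite free_cons (IH _ Hf) andbT.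
apply/negP => gin.
have [s Ps Es] := allcombP Hall gin.
move: Es; rewrite vec_nseq add0r => /rowP /(_ (Ordinal jn)); rewrite !mxE /=.
by rewrite gj; move: Ps; case: (nth false s j).
Qed.


Lemma wt0_vec s : wt s = 0%N -> vec s = 0.
Proof.
rewrite -hwt_vec /hwt => /cards0_eq E; apply/rowP => i.
have : i \notin [set i | vec s 0 i != 0] by rewrite E inE.
by rewrite inE negbK => /eqP ->; rewrite mxE.
Qed.

Lemma code_ok k d gs :
  size gs = k -> freechk 0 gs -> (0 < d)%N ->
  excomb (fun s => wt s == d) gs (nseq n false) ->
  allcomb (fun s => (wt s == 0%N) || ((d <= wt s)%N && has (ipl s) gs)) gs (nseq n false) ->
  is_binary_code n k d <<map vec gs>>%VS /\ euclidean_LCD <<map vec gs>>%VS.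
Proof.
move=> Hk Hf Hd Hex Hall; split; first split.
- by move/eqP: (freechkP Hf); rewrite size_map Hk.
- have [s [/eqP ws [c cin Ec]]] := excombP Hex.
  rewrite vec_nseq add0r in Ec; exists c => //.
  rewrite Ec hwt_vec ws eqxx andbT; apply/eqP => h.
  have := hwt_vec s; rewrite h ws /hwt.
  have -> : [set i | (0 : 'rV['F_2]_n) 0 i != 0] = set0.
    by apply/setP => i; rewrite !inE mxE eqxx.
  by rewrite cards0 => d0; rewrite -d0 in Hd.
- move=> c cin cn0; have [s Ps Es] := allcombP Hall cin.
  rewrite vec_nseq add0r in Es; rewrite Es hwt_vec.
  case/orP: Ps => [/eqP w0|/andP [] //].
  by move: cn0; rewrite Es wt0_vec ?eqxx.
- move=> x xin /forallP dual; have [s Ps Es] := allcombP Hall xin.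
  rewrite vec_nseq add0r in Es; rewrite Es.
  case/orP: Ps => [/eqP w0|/andP [_ /hasP [g gin ip]]]; first exact: wt0_vec.
  have := dual (vec g); rewrite memv_span ?map_f //= Es eip_vec ip.
  by [].
Qed.

End Gen.
Definition gensA : seq (seq bool) := map (map (eqn 1)) [::
  [:: 1; 0; 0; 0; 0; 0; 0; 0; 0; 0; 0; 1; 1; 1; 1; 0; 0; 0; 1; 1; 0; 0; 1; 1; 0; 1; 0; 1; 1; 1];
  [:: 0; 1; 0; 0; 0; 0; 0; 0; 0; 0; 0; 0; 1; 1; 1; 0; 0; 0; 0; 1; 1; 0; 0; 1; 1; 0; 1; 0; 0; 1];
  [:: 0; 0; 1; 0; 0; 0; 0; 0; 0; 0; 0; 1; 0; 1; 1; 1; 0; 0; 0; 0; 1; 1; 0; 0; 1; 1; 0; 1; 1; 0];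
  [:: 0; 0; 0; 1; 0; 0; 0; 0; 0; 0; 0; 1; 1; 0; 1; 1; 1; 0; 0; 0; 0; 1; 1; 0; 0; 1; 1; 0; 0; 1];
  [:: 0; 0; 0; 0; 1; 0; 0; 0; 0; 0; 0; 0; 1; 1; 0; 1; 1; 1; 0; 0; 0; 0; 1; 1; 0; 0; 1; 1; 1; 0];
  [:: 0; 0; 0; 0; 0; 1; 0; 0; 0; 0; 0; 0; 0; 1; 1; 1; 1; 1; 1; 0; 0; 1; 0; 1; 1; 0; 0; 1; 0; 1];
  [:: 0; 0; 0; 0; 0; 0; 1; 0; 0; 0; 0; 0; 0; 0; 1; 0; 1; 1; 1; 1; 0; 0; 1; 0; 1; 1; 0; 0; 1; 0];
  [:: 0; 0; 0; 0; 0; 0; 0; 1; 0; 0; 0; 0; 0; 0; 0; 1; 0; 1; 1; 1; 1; 1; 0; 1; 0; 1; 1; 0; 1; 1];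
  [:: 0; 0; 0; 0; 0; 0; 0; 0; 1; 0; 0; 1; 0; 0; 0; 1; 1; 0; 1; 1; 1; 0; 1; 0; 1; 0; 1; 1; 0; 1];
  [:: 0; 0; 0; 0; 0; 0; 0; 0; 0; 1; 0; 1; 1; 0; 0; 0; 1; 1; 0; 1; 1; 1; 0; 1; 0; 1; 0; 1; 0; 0];
  [:: 0; 0; 0; 0; 0; 0; 0; 0; 0; 0; 1; 1; 1; 1; 0; 0; 0; 1; 1; 0; 1; 1; 1; 0; 1; 0; 1; 0; 1; 0]].

Definition gensB : seq (seq bool) := map (map (eqn 1)) [::
  [:: 1; 0; 0; 0; 0; 0; 0; 0; 0; 0; 0; 0; 0; 0; 0; 0; 1; 1; 1; 1; 1; 1; 1; 1; 1; 1; 1; 1; 1; 1];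
  [:: 0; 1; 0; 0; 0; 0; 0; 0; 0; 0; 0; 0; 0; 0; 0; 1; 0; 1; 1; 1; 1; 0; 1; 0; 0; 0; 1; 0; 0; 0];
  [:: 0; 0; 1; 0; 0; 0; 0; 0; 0; 0; 0; 0; 0; 0; 0; 1; 0; 0; 1; 1; 1; 1; 0; 1; 0; 0; 0; 1; 0; 0];
  [:: 0; 0; 0; 1; 0; 0; 0; 0; 0; 0; 0; 0; 0; 0; 0; 1; 0; 0; 0; 1; 1; 1; 1; 0; 1; 0; 0; 0; 1; 0];
  [:: 0; 0; 0; 0; 1; 0; 0; 0; 0; 0; 0; 0; 0; 0; 0; 1; 0; 0; 0; 0; 1; 1; 1; 1; 0; 1; 0; 0; 0; 1];
  [:: 0; 0; 0; 0; 0; 1; 0; 0; 0; 0; 0; 0; 0; 0; 0; 1; 1; 0; 0; 0; 0; 1; 1; 1; 1; 0; 1; 0; 0; 0];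
  [:: 0; 0; 0; 0; 0; 0; 1; 0; 0; 0; 0; 0; 0; 0; 0; 1; 0; 1; 0; 0; 0; 0; 1; 1; 1; 1; 0; 1; 0; 0];
  [:: 0; 0; 0; 0; 0; 0; 0; 1; 0; 0; 0; 0; 0; 0; 0; 1; 0; 0; 1; 0; 0; 0; 0; 1; 1; 1; 1; 0; 1; 0];
  [:: 0; 0; 0; 0; 0; 0; 0; 0; 1; 0; 0; 0; 0; 0; 0; 1; 0; 0; 0; 1; 0; 0; 0; 0; 1; 1; 1; 1; 0; 1];
  [:: 0; 0; 0; 0; 0; 0; 0; 0; 0; 1; 0; 0; 0; 0; 0; 1; 1; 0; 0; 0; 1; 0; 0; 0; 0; 1; 1; 1; 1; 0];
  [:: 0; 0; 0; 0; 0; 0; 0; 0; 0; 0; 1; 0; 0; 0; 0; 1; 0; 1; 0; 0; 0; 1; 0; 0; 0; 0; 1; 1; 1; 1];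
  [:: 0; 0; 0; 0; 0; 0; 0; 0; 0; 0; 0; 1; 0; 0; 0; 1; 1; 0; 1; 0; 0; 0; 1; 0; 0; 0; 0; 1; 1; 1];
  [:: 0; 0; 0; 0; 0; 0; 0; 0; 0; 0; 0; 0; 1; 0; 0; 1; 1; 1; 0; 1; 0; 0; 0; 1; 0; 0; 0; 0; 1; 1];
  [:: 0; 0; 0; 0; 0; 0; 0; 0; 0; 0; 0; 0; 0; 1; 0; 1; 1; 1; 1; 0; 1; 0; 0; 0; 1; 0; 0; 0; 0; 1];
  [:: 0; 0; 0; 0; 0; 0; 0; 0; 0; 0; 0; 0; 0; 0; 1; 1; 1; 1; 1; 1; 0; 1; 0; 0; 0; 1; 0; 0; 0; 0]].

Definition gensC : seq (seq bool) := map (map (eqn 1)) [::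
  [:: 1; 0; 0; 0; 0; 0; 0; 0; 0; 0; 0; 1; 1; 0; 1; 1; 1; 1; 0; 0; 1; 0; 0; 1; 1; 0; 1; 0; 1; 0; 1; 1; 1];
  [:: 0; 1; 0; 0; 0; 0; 0; 0; 0; 0; 0; 0; 1; 1; 0; 1; 1; 1; 1; 0; 0; 1; 1; 0; 1; 1; 0; 1; 0; 1; 0; 1; 1];
  [:: 0; 0; 1; 0; 0; 0; 0; 0; 0; 0; 0; 1; 0; 1; 1; 0; 1; 1; 1; 1; 0; 0; 1; 1; 0; 1; 1; 0; 1; 0; 1; 0; 1];
  [:: 0; 0; 0; 1; 0; 0; 0; 0; 0; 0; 0; 0; 1; 0; 1; 1; 0; 1; 1; 1; 1; 0; 1; 1; 1; 0; 1; 1; 0; 1; 0; 1; 0];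
  [:: 0; 0; 0; 0; 1; 0; 0; 0; 0; 0; 0; 0; 0; 1; 0; 1; 1; 0; 1; 1; 1; 1; 0; 1; 1; 1; 0; 1; 1; 0; 1; 0; 1];
  [:: 0; 0; 0; 0; 0; 1; 0; 0; 0; 0; 0; 1; 0; 0; 1; 0; 1; 1; 0; 1; 1; 1; 1; 0; 1; 1; 1; 0; 1; 1; 0; 1; 0];
  [:: 0; 0; 0; 0; 0; 0; 1; 0; 0; 0; 0; 1; 1; 0; 0; 1; 0; 1; 1; 0; 1; 1; 0; 1; 0; 1; 1; 1; 0; 1; 1; 0; 1];
  [:: 0; 0; 0; 0; 0; 0; 0; 1; 0; 0; 0; 1; 1; 1; 0; 0; 1; 0; 1; 1; 0; 1; 1; 0; 1; 0; 1; 1; 1; 0; 1; 1; 0];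
  [:: 0; 0; 0; 0; 0; 0; 0; 0; 1; 0; 0; 1; 1; 1; 1; 0; 0; 1; 0; 1; 1; 0; 0; 1; 0; 1; 0; 1; 1; 1; 0; 1; 1];
  [:: 0; 0; 0; 0; 0; 0; 0; 0; 0; 1; 0; 0; 1; 1; 1; 1; 0; 0; 1; 0; 1; 1; 1; 0; 1; 0; 1; 0; 1; 1; 1; 0; 1];
  [:: 0; 0; 0; 0; 0; 0; 0; 0; 0; 0; 1; 1; 0; 1; 1; 1; 1; 0; 0; 1; 0; 1; 1; 1; 0; 1; 0; 1; 0; 1; 1; 1; 0]].

Lemma partA : exists C : {vspace 'rV['F_2]_30}, is_binary_code 30 11 9 C /\ euclidean_LCD C.
Proof.
exists <<map (vec 30) gensA>>%VS.
apply: (@code_ok 30 11 9 gensA); vm_compute; reflexivity.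
Qed.
Lemma partB : exists C : {vspace 'rV['F_2]_30}, is_binary_code 30 15 7 C /\ euclidean_LCD C.
Proof.
exists <<map (vec 30) gensB>>%VS.
apply: (@code_ok 30 15 7 gensB); vm_compute; reflexivity.
Qed.
Lemma partC : exists C : {vspace 'rV['F_2]_33}, is_binary_code 33 11 11 C /\ euclidean_LCD C.
Proof.
exists <<map (vec 33) gensC>>%VS.
apply: (@code_ok 33 11 11 gensC); vm_compute; reflexivity.
Qed.

Theorem proposition4p6 :
  [/\ exists C : {vspace 'rV['F_2]_30}, is_binary_code 30 11 9 C /\ euclidean_LCD C,
      exists C : {vspace 'rV['F_2]_30}, is_binary_code 30 15 7 C /\ euclidean_LCD C
    & exists C : {vspace 'rV['F_2]_33}, is_binary_code 33 11 11 C /\ euclidean_LCD C].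
Proof. split; [exact: partA | exact: partB | exact: partC]. Qed.
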